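(* Assume the standing setup. For any distinct $i,j\in[k]$ there exist distinct indices $i_2,\dots,i_d\in[k]$ such that: (1) if $\alpha_i,\alpha_j$ are not proportional, then $\alpha_i,\alpha_j,\alpha_{i_2},\dots,\alpha_{i_d}$ are linearly independent; (2) if $\alpha_i,\alpha_j$ are proportional, then $\alpha_i,\alpha_{i_2},\dots,\alpha_{i_d}$ are linearly independent.
   Context: Standing setup: $\mathbb{F}$ is a field of characteristic $0$; $W$ is a group with finite generating set $S=\{s_1,\dots,s_k\}$. A linear map on a finite-dimensional space is a (generalized) reflection if it is diagonalizable and $s-\operatorname{Id}$ has rank $1$; a reflection vector is a nonzero vector in $\operatorname{Im}(s-\operatorname{Id})$. $(V_1,\rho_1)$ is an irreducible reflection representation of $(W,S)$ (each $s_i$ acts by a reflection) of dimension $n$, and $\alpha_i\in V_1$ is a chosen reflection vector of $s_i$ for each $i\in[k]$. $d$ is an integer with $1\le d\le n-1$. *)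

(* Defs.v *)
From HB Require Import structures.
From mathcomp Require Import all_boot all_order all_algebra.
Set Implicit Arguments. Unset Strict Implicit. Unset Printing Implicit Defensive.
Import GRing.Theory.
Local Open Scope ring_scope.

Definition is_group (W : Type) (mul : W -> W -> W) (one : W) (inv : W -> W) : Prop :=
  [/\ forall a b c, mul a (mul b c) = mul (mul a b) c,
      forall a, mul one a = a,
      forall a, mul a one = a,
      forall a, mul (inv a) a = one
    & forall a, mul a (inv a) = one].

Inductive generated (W : Type) (mul : W -> W -> W) (one : W) (inv : W -> W)
    (k : nat) (s : 'I_k -> W) : W -> Prop :=
  | gen_one : generated mul one inv s one
  | gen_gen i : generated mul one inv s (s i)
  | gen_inv w : generated mul one inv s w -> generated mul one inv s (inv w)
  | gen_mul w1 w2 : generated mul one inv s w1 -> generated mul one inv s w2 ->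
                    generated mul one inv s (mul w1 w2).

(* Linear representations on the row space 'rV[F]_n (mathcomp convention:
   vectors are rows, w acts by v |-> v *m rho w). *)
Definition is_rep (F : fieldType) (n : nat) (W : Type) (mul : W -> W -> W) (one : W)
    (rho : W -> 'M[F]_n) : Prop :=
  rho one = 1%:M /\ forall a b, rho (mul a b) = rho a *m rho b.

Definition irreducible_rep (F : fieldType) (n : nat) (W : Type) (rho : W -> 'M[F]_n) : Prop :=
  (0 < n)%N /\
  forall U : 'M[F]_n, (forall w, (U *m rho w <= U)%MS) -> U == 0 \/ row_full U.

Definition is_reflection (F : fieldType) (n : nat) (A : 'M[F]_n) : Prop :=
  diagonalizable A /\ \rank (A - 1%:M) = 1%N.

Definition is_reflection_vector (F : fieldType) (n : nat) (A : 'M[F]_n) (a : 'rV[F]_n) : Prop :=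
  a != 0 /\ (a <= A - 1%:M)%MS.

Definition proportional (F : fieldType) (n : nat) (u v : 'rV[F]_n) : Prop :=
  exists c : F, v = c *: u \/ u = c *: v.

(* Main.v *)
Require Import Defs.
From HB Require Import structures.
From mathcomp Require Import all_boot all_order all_algebra zify.
From Stdlib Require Import Classical.
Import GRing.Theory.
Local Open Scope ring_scope.

Lemma rank_colmx (F : fieldType) p q n (A : 'M[F]_(p,n)) (B : 'M[F]_(q,n)) :
  \rank (col_mx A B) = \rank (A + B)%MS.
Proof. by apply/eqmx_rank; apply/eqmxP; apply: eqmx_sym; exact: addsmxE. Qed.

Lemma L1 (F : fieldType) p n (X : 'M[F]_(p,n)) (v : 'rV_n) :
  row_free X -> ~~ (v <= X)%MS -> row_free (col_mx X v).
Proof.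
rewrite /row_free => /eqP rX nv.
rewrite rank_colmx eqn_leq; apply/andP; split.
  apply: leq_trans (mxrank_adds_leqif X v).1 _.
  by rewrite rX leq_add2l rank_leq_row.
have lt : (\rank X < \rank (X + v)%MS)%N.
  rewrite (ltn_leqif (mxrank_leqif_sup (addsmxSl X v))).
  by rewrite addsmx_sub submx_refl.
by rewrite addn1 -{1}rX.
Qed.

Lemma L_ext (F : fieldType) n k (alpha : 'I_k -> 'rV[F]_n)
  (full : forall v : 'rV[F]_n, (v <= \matrix_(i < k) alpha i)%MS) m (B : 'M[F]_(m,n)) :
  row_free B -> forall r, (m + r <= n)%N ->
  exists t : 'I_r -> 'I_k, injective t /\ row_free (col_mx B (\matrix_(l < r) alpha (t l))).
Proof.
move=> fB; elim=> [|r IH] le.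
  have f : 'I_0 -> 'I_k by case.
  exists f; split; first by case.
  rewrite /row_free rank_colmx addn0.
  have -> : (\matrix_(l < 0) alpha (f l)) = 0 by apply/matrixP=> [[]].
  by rewrite addsmx0 (eqP fB).
have [t [it fX]] := IH (leq_trans (leq_add (leqnn m) (leqnSn r)) le).
set X := col_mx B _ in fX.
have [i ni] : exists i, ~~ (alpha i <= X)%MS.
  apply/existsP; apply: contraTT le; rewrite negb_exists => /forallP H.
  have : (\matrix_(i < k) alpha i <= X)%MS by apply/row_subP => i; by rewrite rowK; move: (H i); rewrite negbK.
  have F1 : ((1%:M : 'M[F]_n) <= \matrix_(i < k) alpha i)%MS by apply/row_subP => j; exact: full.
  move/(submx_trans F1)/mxrankS; rewrite mxrank1 (eqP fX) -ltnNge addnS.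
  by [].
set M := \matrix_(l < r) alpha (t l) in X fX ni *.
have sMX : (M <= X)%MS by rewrite /X -addsmxE addsmxSr.
have ti : forall l, t l != i.
  move=> l; apply: contraNneq ni => <-.
  by apply: submx_trans sMX; move: (row_sub l M); rewrite rowK.
pose t' := fun l : 'I_r.+1 => if unlift ord_max l is Some l' then t l' else i.
exists t'; split.
  move=> a b; rewrite /t'.
  case: (unliftP ord_max a) => [a'|] ->; case: (unliftP ord_max b) => [b'|] ->;
    rewrite ?liftK ?unlift_none //.
  - by move/it => ->.
  - by move=> e; move: (ti a'); rewrite e eqxx.
  - by move=> e; move: (ti b'); rewrite e eqxx.
set M' := \matrix_(l < r.+1) alpha (t' l).
have E : (M' == M + alpha i)%MS.
  apply/andP; split.
    apply/row_subP => l; rewrite rowK /t'.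
    case: (unliftP ord_max l) => [l'|] _.
      by apply: submx_trans (addsmxSl _ _); move: (row_sub l' M); rewrite rowK.
    exact: addsmxSr.
  rewrite addsmx_sub; apply/andP; split.
    apply/row_subP => l; rewrite rowK.
    have -> : alpha (t l) = row (lift ord_max l) M' by rewrite rowK /t' liftK.
    exact: row_sub.
  have -> : alpha i = row ord_max M' by rewrite rowK /t' unlift_none.
  exact: row_sub.
have L := @L1 _ _ _ X (alpha i) fX ni.
rewrite /row_free rank_colmx.
have -> : \rank (B + M')%MS = \rank (col_mx X (alpha i)).
  rewrite rank_colmx /X; apply/eqmx_rank.
  apply/eqmxP.
  apply: eqmx_trans (adds_eqmx (addsmxE B M) (eqmx_refl (alpha i))).
  rewrite -addsmxA; apply: adds_eqmx (eqmx_refl B) _.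
  exact/eqmxP.
move: L; rewrite /row_free => /eqP ->; by rewrite !addnS addn0.
Qed.

Theorem lemma5p8
  (F : fieldType) (Fchar0 : [pchar F] =i pred0)
  (W : Type) (mul : W -> W -> W) (one : W) (inv : W -> W)
  (Wgroup : is_group mul one inv)
  (k : nat) (s : 'I_k -> W) (Sgen : forall w, generated mul one inv s w)
  (n : nat) (rho : W -> 'M[F]_n) (rho_rep : is_rep mul one rho)
  (rho_irr : irreducible_rep rho)
  (rho_refl : forall i, is_reflection (rho (s i)))
  (alpha : 'I_k -> 'rV[F]_n)
  (alpha_refl : forall i, is_reflection_vector (rho (s i)) (alpha i))
  (d : nat) (d_ge1 : (1 <= d)%N) (d_le : (d <= n - 1)%N) :
  forall i j : 'I_k, i != j ->
  exists t : 'I_(d.-1) -> 'I_k,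
    injective t /\
    (~ proportional (alpha i) (alpha j) ->
       row_free (col_mx (col_mx (alpha i) (alpha j)) (\matrix_(l < d.-1) alpha (t l)))) /\
    (proportional (alpha i) (alpha j) ->
       row_free (col_mx (alpha i) (\matrix_(l < d.-1) alpha (t l)))).
Proof.
move=> i j nij.
case: rho_rep => rho1 rhoM.
case: Wgroup => _ _ _ _ mulV.
set U := \matrix_(l < k) alpha l.
have aU : forall l, (alpha l <= U)%MS by move=> l; rewrite -(rowK alpha l) row_sub.
have anz : forall l, alpha l != 0 by move=> l; case: (alpha_refl l).
have refl_sub : forall l, (rho (s l) - 1%:M <= alpha l)%MS.
  move=> l; case: (alpha_refl l) => nz sub.
  case: (rho_refl l) => _ r1.
  have := mxrank_leqif_sup sub; rewrite rank_rV nz r1 => H.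
  by rewrite -H.2.
have stab : forall w, (U *m rho w <= U)%MS.
  move=> w; elim: (Sgen w).
  - by rewrite rho1 mulmx1.
  - move=> l.
    have -> : U *m rho (s l) = U + U *m (rho (s l) - 1%:M) by rewrite mulmxBr mulmx1 addrC subrK.
    apply: addmx_sub => //.
    by apply: submx_trans (submxMl _ _) _; apply: submx_trans (refl_sub l) (aU l).
  - move=> w0 _ IH.
    have RR : rho w0 *m rho (inv w0) = 1%:M by rewrite -rhoM mulV rho1.
    have sU : (U <= U *m rho w0)%MS.
      rewrite -(mxrank_leqif_sup IH).2; apply/eqP/anti_leq/andP; split.
        by rewrite mxrankS.
      have e : U = U *m rho w0 *m rho (inv w0) by rewrite -mulmxA RR mulmx1.
      by rewrite {1}e mxrankM_maxl.
    have := submxMr (rho (inv w0)) sU; by rewrite -mulmxA RR mulmx1.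
  - move=> w1 w2 _ IH1 _ IH2.
    rewrite rhoM mulmxA; apply: submx_trans IH2.
    exact: submxMr.
have full : forall v : 'rV[F]_n, (v <= U)%MS.
  have stab' : forall w, (<<U>>%MS *m rho w <= <<U>>)%MS.
    by move=> w; rewrite (eqmxMr _ (genmxE U)) genmxE.
  case: rho_irr => _ /(_ _ stab') [U0|fU].
    have h : (alpha i <= <<U>>)%MS by rewrite genmxE.
    by move: h; rewrite (eqP U0) submx0 (negbTE (anz i)).
  move=> v; have h : (v <= <<U>>)%MS by exact: submx_full.
  by move: h; rewrite genmxE.
have fi : row_free (alpha i) by rewrite /row_free rank_rV anz.
case: (classic (proportional (alpha i) (alpha j))) => P.
  have le : (1 + d.-1 <= n)%N by lia.
  have [t [it ft]] := @L_ext F n k alpha full 1 (alpha i) fi d.-1 le.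
  by exists t; split=> //; split.
have fB : row_free (col_mx (alpha i) (alpha j)).
  apply: L1 => //; apply/negP => /submxP [D e].
  apply: P; exists (D 0 0); left.
  by rewrite e {1}(mx11_scalar D) mul_scalar_mx.
have le : (1 + 1 + d.-1 <= n)%N by lia.
have [t [it ft]] := @L_ext F n k alpha full _ _ fB d.-1 le.
by exists t; split=> //; split.
Qed.
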